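(* In the setting below, let $p,q\in X$ with $S_p\cup S_q=E$ and $|S_p\cap S_q|=n-1$, and let $r\in X$ with $S_r\ne S_p$, $S_r\ne S_q$ and $|S_r|\ge 2$. Then either $S_r\subseteq S_p\cap S_q$ or $S_r=(S_p\setminus S_q)\cup(S_q\setminus S_p)$.
   Context: Setting: $E=\{e_0,\dots,e_n\}\subset\mathbb R^n$ is the vertex set of an $n$-simplex with $e_0+\cdots+e_n=0$, and $X\subset\mathbb R^n\setminus\{0\}$ is a finite set with $E\subseteq X$, no element of $X$ a positive multiple of another, such that every $n+1$ points of $X$ are in good position. (A finite set $A$ is in conical position if $0\notin\operatorname{conv}A$ and no point of $A$ lies in the positive hull—set of nonnegative linear combinations—of the other points; it is in good position otherwise.) For $p\in X$, the support $S_p$ is the minimal subset of $E$ whose positive hull contains $p$. *)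

(* Defs.v *)
From HB Require Import structures.
From mathcomp Require Import all_boot all_order all_algebra.
Set Implicit Arguments. Unset Strict Implicit. Unset Printing Implicit Defensive.
Import Order.TTheory GRing.Theory Num.Theory.
Local Open Scope ring_scope.

Section Defs.
Variables (R : realFieldType) (n : nat).
Local Notation V := 'rV[R]_n.

Definition in_pos_hull (A : seq V) (v : V) : Prop :=
  exists c : V -> R, (forall a, a \in A -> 0 <= c a) /\ v = \sum_(a <- undup A) c a *: a.

Definition in_conv (A : seq V) (v : V) : Prop :=
  exists c : V -> R, (forall a, a \in A -> 0 <= c a) /\
    \sum_(a <- undup A) c a = 1 /\ v = \sum_(a <- undup A) c a *: a.

Definition conical_position (A : seq V) : Prop :=
  ~ in_conv A 0 /\ forall a, a \in A -> ~ in_pos_hull [seq b <- A | b != a] a.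

Definition good_position (A : seq V) : Prop := ~ conical_position A.

Definition affinely_independent (e : 'I_n.+1 -> V) : Prop :=
  forall c : 'I_n.+1 -> R, \sum_i c i *: e i = 0 -> \sum_i c i = 0 -> forall i, c i = 0.

Definition in_pos_hullE (e : 'I_n.+1 -> V) (S : {set 'I_n.+1}) (p : V) : Prop :=
  in_pos_hull [seq e i | i in S] p.

Definition is_support (e : 'I_n.+1 -> V) (p : V) (S : {set 'I_n.+1}) : Prop :=
  in_pos_hullE e S p /\ forall T : {set 'I_n.+1}, T \proper S -> ~ in_pos_hullE e T p.

Definition setting (e : 'I_n.+1 -> V) (X : seq V) : Prop :=
  affinely_independent e /\
  \sum_i e i = 0 /\
  (forall i, e i \in X) /\
  (forall x, x \in X -> x != 0) /\
  (forall x y (t : R), x \in X -> y \in X -> 0 < t -> x = t *: y -> x = y) /\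
  (forall A : seq V, uniq A -> size A = n.+1 -> {subset A <= X} -> good_position A).

End Defs.

(* Main.v *)
Require Import Defs.
From HB Require Import structures.
From mathcomp Require Import all_boot all_order all_algebra.
From mathcomp Require Import ring lra zify.
Import Order.TTheory GRing.Theory Num.Theory.
Local Open Scope ring_scope.

Lemma nsym (T : eqType) (x y : T) : x != y -> y != x.
Proof. by rewrite eq_sym. Qed.

Section Aux.
Variables (R : realFieldType) (n : nat).
Local Notation V := 'rV[R]_n.
Variable e : 'I_n.+1 -> V.
Hypothesis aff : affinely_independent e.
Hypothesis sum0 : \sum_i e i = 0.

Lemma keyK (c : 'I_n.+1 -> R) : \sum_i c i *: e i = 0 -> forall i j, c i = c j.
Proof.
move=> H.
set m := (\sum_i c i) / (n.+1)%:R.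
have H1 : \sum_i (c i - m) *: e i = 0.
  under eq_bigr do rewrite scalerBl.
  by rewrite sumrB H -scaler_sumr sum0 scaler0 subr0.
have H2 : \sum_i (c i - m) = 0.
  rewrite sumrB sumr_const card_ord /m; apply/eqP; rewrite subr_eq0; apply/eqP.
  by rewrite -[RHS]mulr_natr divfK // pnatr_eq0.
move=> i j; have h := aff _ H1 H2.
by have := h i; have := h j; move=> /eqP; rewrite subr_eq0 => /eqP -> /eqP; rewrite subr_eq0 => /eqP ->.
Qed.

Lemma e_coord k : e k = \sum_i (i == k)%:R *: e i.
Proof.
rewrite (bigD1 k) //= eqxx scale1r big1 ?addr0 // => i /negbTE ->; by rewrite scale0r.
Qed.

Lemma coord_eq (X Y : 'I_n.+1 -> R) : \sum_i X i *: e i = \sum_i Y i *: e i ->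
  forall i j, X i - Y i = X j - Y j.
Proof.
move=> H; apply: keyK. under eq_bigr do rewrite scalerBl. by rewrite sumrB H subrr.
Qed.

Lemma e_inj : injective e.
Proof.
move=> i k H. apply/eqP; apply/negP => /negP ne.
have := @coord_eq (fun t => (t == i)%:R) (fun t => (t == k)%:R) _ i k.
rewrite -!e_coord H => /(_ erefl). rewrite !eqxx (negbTE ne) eq_sym (negbTE ne) /=.
move=> /eqP; rewrite !(subr0, sub0r) -addr_eq0 (_ : 1 + 1 = 2%:R) ?pnatr_eq0 //.
Qed.

Lemma hull_of (S : {set 'I_n.+1}) (G : 'I_n.+1 -> R) :
  (forall i, i \in S -> 0 <= G i) -> in_pos_hullE e S (\sum_(i in S) G i *: e i).
Proof.
move=> HG. exists (fun v => \sum_(i in S) (v == e i)%:R * G i). split.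
- move=> v /mapP [k]; rewrite mem_enum => kS ->.
  rewrite (bigD1 k) //= eqxx mul1r big1 ?addr0; first exact: HG.
  move=> i /andP [_ ne]; by rewrite (inj_eq e_inj) eq_sym (negbTE ne) mul0r.
- rewrite undup_id ?(map_inj_uniq e_inj) ?enum_uniq // big_map big_enum /=.
  apply: eq_bigr => k kS. rewrite (bigD1 k) //= eqxx mul1r big1 ?addr0 //.
  move=> i /andP [_ ne]; by rewrite (inj_eq e_inj) eq_sym (negbTE ne) mul0r.
Qed.

Lemma hull_coords S p : in_pos_hullE e S p -> exists G : 'I_n.+1 -> R,
  (forall i, i \in S -> 0 <= G i) /\ p = \sum_(i in S) G i *: e i.
Proof.
case=> c [Hc ->]. exists (fun i => c (e i)); split.
- move=> i iS; apply: Hc; apply/mapP; exists i; rewrite ?mem_enum //.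
- by rewrite undup_id ?(map_inj_uniq e_inj) ?enum_uniq // big_map big_enum.
Qed.

Lemma support_coords p S : is_support e p S ->
  exists P : 'I_n.+1 -> R, [/\ forall i, i \in S -> 0 < P i,
     forall i, i \notin S -> P i = 0 & p = \sum_i P i *: e i].
Proof.
case=> /hull_coords [G [HG Hp]] Hmin.
exists (fun i => if i \in S then G i else 0); split.
- move=> i iS; rewrite iS lt_def HG // andbT. apply/negP => /eqP G0.
  apply: (Hmin (S :\ i)); first by rewrite properD1.
  have -> : p = \sum_(k in S :\ i) G k *: e k.
    rewrite Hp (bigD1 i) //= G0 scale0r add0r; apply: eq_bigl => k; by rewrite !inE andbC.
  apply: hull_of => k; rewrite !inE => /andP [_ kS]; exact: HG.
- by move=> i /negbTE ->.
- rewrite Hp big_mkcond /=. apply: eq_bigr => i _. by case: (i \in S); rewrite ?scale0r.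
Qed.

Lemma support_notT p S : is_support e p S -> S != setT.
Proof.
move=> HS; apply/negP => /eqP ST.
case: (@support_coords _ _ HS) => P [Hpos H0 Hp].
have [k Hk] : exists k, forall i, P k <= P i.
  case: (@arg_minP _ _ _ ord0 predT P) => // k _ Hk; exists k => i; exact: Hk.
case: HS => _ Hmin. apply: (Hmin (setT :\ k)); first by rewrite ST properD1 // inE.
have -> : p = \sum_(i in setT :\ k) (P i - P k) *: e i.
  rewrite Hp. have -> : \sum_i P i *: e i = \sum_i (P i - P k) *: e i.
    under [RHS]eq_bigr do rewrite scalerBl.
    by rewrite sumrB -scaler_sumr sum0 scaler0 subr0.
  rewrite (bigD1 k) //= subrr scale0r add0r. apply: eq_bigl => i; by rewrite !inE andbT.
apply: hull_of => i _; rewrite subr_ge0; exact: Hk.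
Qed.


Lemma tool (X : seq V) x y (Xc Yc : 'I_n.+1 -> R) j l i1 i2 :
  (forall i, e i \in X) ->
  (forall A : seq V, uniq A -> size A = n.+1 -> {subset A <= X} -> good_position A) ->
  x \in X -> y \in X ->
  x = \sum_i Xc i *: e i -> y = \sum_i Yc i *: e i ->
  j != l -> i1 != i2 -> i1 \notin [set j; l] -> i2 \notin [set j; l] ->
  0 < Yc j - Yc l -> Xc j - Xc l < 0 ->
  0 < (Yc j - Yc l) * (Xc i1 - Xc j) - (Xc j - Xc l) * (Yc i1 - Yc j) ->
  0 < (Yc j - Yc l) * (Xc i2 - Xc j) - (Xc j - Xc l) * (Yc i2 - Yc j) ->
  False.
Proof.
move=> eX good hx hy Hx Hy jl i12 i1K i2K HF HD.
set F := Yc j - Yc l in HF *. set D := Xc j - Xc l in HD *.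
pose M i := F * (Xc i - Xc j) - D * (Yc i - Yc j).
rewrite -/(M i1) -/(M i2) => M1 M2.
pose K := ~: [set j; l].
have jK : j \notin K by rewrite !inE eqxx.
have lK : l \notin K by rewrite !inE eqxx orbT.
have i1K' : i1 \in K by rewrite inE.
have i2K' : i2 \in K by rewrite inE.
pose A := x :: y :: [seq e i | i <- enum K].
have sumA : forall c : V -> R, \sum_(b <- A) c b *: b =
    c x *: x + (c y *: y + \sum_(i in K) c (e i) *: e i).
  by move=> c; rewrite !big_cons big_map big_enum.
have uniqR : forall c : V -> R, \sum_(b <- A) c b *: b = 0 ->
   exists k, [/\ c x = k * F, c y = - k * D & forall i, i \in K -> c (e i) = - k * M i].
  move=> c; rewrite sumA => H.
  pose G i := c x * Xc i + c y * Yc i + (if i \in K then c (e i) else 0).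
  have HG : \sum_i G i *: e i = 0.
    rewrite -[RHS]H; set cx := c x; set cy := c y; rewrite /G -/cx -/cy Hx Hy !scaler_sumr (big_mkcond (fun i => i \in K)) -!big_split /=.
    apply: eq_bigr => i _; rewrite !scalerDl !scalerA addrA.
    by case: ifP; rewrite ?scale0r.
  have Gc := keyK _ HG.
  have Gjl := Gc j l; rewrite /G (negbTE jK) (negbTE lK) !addr0 in Gjl.
  have HF0 : F != 0 by rewrite gt_eqF.
  exists (c x / F); split.
  - by rewrite divfK.
  - have e1 : c y * F = - (c x * D) by rewrite /F /D; lra.
    by rewrite -[LHS](mulfK HF0) e1; field.
  - move=> i iK. have Gij := Gc i j; rewrite /G iK (negbTE jK) addr0 in Gij.
    have e1 : c y * F = - (c x * D) by rewrite /F /D; lra.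
    have e2 : c (e i) = c x * (Xc j - Xc i) + c y * (Yc j - Yc i) by lra.
    rewrite e2 /M. apply: (mulIf HF0).
    rewrite mulrDl (mulrAC (c y)) e1. field.
    by [].
have xney : x != y.
  apply/eqP => exy. have := @coord_eq Xc Yc _ j l.
  rewrite -Hx -Hy exy => /(_ erefl) h. rewrite /F /D in HF HD. clear -h HF HD; lra.
have xnotK : forall i, i \in K -> x != e i.
  move=> i iK; apply/eqP => exi. have := @coord_eq Xc (fun t => (t == i)%:R) _ j l.
  rewrite -Hx -e_coord exi => /(_ erefl).
  have -> : (j == i) = false by apply/eqP => ji; rewrite ji iK in jK.
  have -> : (l == i) = false by apply/eqP => li; rewrite li iK in lK.
  rewrite /D in HD => /= h; clear -h HD; lra.
have ynotK : forall i, i \in K -> y != e i.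
  move=> i iK; apply/eqP => exi. have := @coord_eq Yc (fun t => (t == i)%:R) _ j l.
  rewrite -Hy -e_coord exi => /(_ erefl).
  have -> : (j == i) = false by apply/eqP => ji; rewrite ji iK in jK.
  have -> : (l == i) = false by apply/eqP => li; rewrite li iK in lK.
  rewrite /F in HF => /= h; clear -h HF; lra.
have uA : uniq A.
  rewrite /A /= (map_inj_uniq e_inj) enum_uniq andbT !inE negb_or xney /=.
  apply/andP; split; apply/negP => /mapP [i]; rewrite mem_enum => iK /eqP.
  - by rewrite (negbTE (xnotK i iK)).
  - by rewrite (negbTE (ynotK i iK)).
have memE : forall i, i \in K -> e i \in A.
  by move=> i iK; rewrite !inE; apply/orP; right; apply/orP; right; apply: map_f; rewrite mem_enum.
apply: (good A uA).
- rewrite /A /= size_map -cardE. have := cardsC [set j; l]. rewrite cards2 jl card_ord.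
  by move=> h; rewrite -add2n; exact: h.
- move=> b; rewrite !inE => /orP [/eqP ->//|/orP [/eqP ->//|/mapP [i _ ->]]]; exact: eX.
split.
- case=> c [c0 [s1 s0]]. rewrite undup_id // in s1 s0.
  have [k [cx cy cK]] := uniqR c (esym s0).
  have hx0 : 0 <= c x by apply: c0; rewrite inE eqxx.
  have hi1 : 0 <= c (e i1) by apply: c0; exact: memE.
  rewrite cx in hx0; rewrite cK // in hi1.
  have k0 : k = 0 by nra.
  move: s1; rewrite !big_cons big_map big_enum /= cx cy k0 big1 ?(mul0r, mulNr, oppr0, addr0) //.
  + by move/eqP; rewrite eq_sym oner_eq0.
  + by move=> i iK; rewrite cK // k0 mulNr mul0r oppr0.
- move=> a aA [c [c0 Ha]]. rewrite undup_id ?filter_uniq // in Ha.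
  pose c' := fun b => if b == a then -1 else c b.
  have c'pos : forall b, b \in A -> b != a -> 0 <= c' b.
    move=> b bA ba; rewrite /c' (negbTE ba); apply: c0; by rewrite mem_filter ba.
  have S0 : \sum_(b <- A) c' b *: b = 0.
    rewrite (bigD1_seq a) //= {1}/c' eqxx scaleN1r.
    rewrite -big_filter (eq_big_seq (fun b => c b *: b)); last first.
      by move=> b; rewrite mem_filter => /andP [ba _]; rewrite /c' (negbTE ba).
    by rewrite -Ha addNr.
  have [k [cx cy cK]] := uniqR c' S0.
  have kge : 0 <= k.
    case: (boolP (x == a)) => xa.
    + have : 0 <= c' y.
        apply: c'pos; first by rewrite !inE eqxx orbT.
        by rewrite -(eqP xa) eq_sym.
      rewrite cy; nra.
    + have : 0 <= c' x by apply: c'pos => //; rewrite inE eqxx.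
      rewrite cx; nra.
  have kle : k <= 0.
    have e12 : e i1 != e i2 by rewrite (inj_eq e_inj).
    case: (boolP (e i1 == a)) => ia.
    + have : 0 <= c' (e i2).
        apply: c'pos; first exact: memE.
        by rewrite -(eqP ia) eq_sym.
      rewrite cK //; nra.
    + have : 0 <= c' (e i1) by apply: c'pos => //; exact: memE.
      rewrite cK //; nra.
  have k0 : k = 0 by apply/eqP; rewrite eq_le kle kge.
  have : c' a = 0.
    move: aA; rewrite !inE => /orP [/eqP ->|/orP [/eqP ->|/mapP [i]]].
    + by rewrite cx k0 mul0r.
    + by rewrite cy k0 mulNr mul0r oppr0.
    + rewrite mem_enum => iK ->. by rewrite cK // k0 mulNr mul0r oppr0.
  rewrite /c' eqxx => /eqP; rewrite oppr_eq0 oner_eq0 //.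
Qed.


Lemma core (X : seq V) p q r (P Q Rc : 'I_n.+1 -> R) a b c d :
  (forall i, e i \in X) ->
  (forall A : seq V, uniq A -> size A = n.+1 -> {subset A <= X} -> good_position A) ->
  p \in X -> q \in X -> r \in X ->
  p = \sum_i P i *: e i -> q = \sum_i Q i *: e i -> r = \sum_i Rc i *: e i ->
  P a = 0 -> (forall i, i != a -> 0 < P i) -> Q b = 0 -> (forall i, i != b -> 0 < Q i) ->
  (forall i, 0 <= Rc i) -> Rc c = 0 -> 0 < Rc d -> 0 < Rc a ->
  a != b -> c != a -> c != b -> d != a -> d != b -> c != d -> False.
Proof.
move=> eX good hp hq hr Hp Hq Hr Pa HP Qb HQ R0 Rc0 Rd Ra ab ca cb da db cd.
have Pb := HP b (@nsym _ _ _ ab).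
have Pc := HP c ca. have Pd := HP d da.
have Qa := HQ a ab. have Qc := HQ c cb. have Qd := HQ d db.
have Rb := R0 b.
have L2 : ~ (P b <= P c /\ P b <= P d).
  case=> h1 h2.
  apply: (@tool X p q P Q a b c d eX good hp hq Hp Hq ab cd); rewrite ?Pa ?Qb.
  - by rewrite !inE negb_or ca cb.
  - by rewrite !inE negb_or da db.
  - lra.
  - lra.
  - nra.
  - nra.
have L1 : ~ (P d < P b /\ P d < P c).
  case=> h1 h2.
  have dnA : a != d by rewrite eq_sym.
  apply: (@tool X p (e a) P (fun i => (i == a)%:R) a d b c eX good hp (eX a) Hp (e_coord a) dnA _).
  - by rewrite eq_sym.
  - by rewrite !inE negb_or eq_sym ab /= eq_sym.
  - by rewrite !inE negb_or ca cd.
  - rewrite eqxx (negbTE da) /=; lra.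
  - rewrite Pa; lra.
  - rewrite eqxx (negbTE da) (negbTE (@nsym _ _ _ ab)) Pa /=; lra.
  - rewrite eqxx (negbTE da) (negbTE ca) Pa /=; lra.
have PcPb : P c < P b.
  rewrite ltNge; apply/negP => hbc.
  case: (ltP (P d) (P b)) => hdb.
  - by apply: L1; split => //; exact: lt_le_trans hdb hbc.
  - by apply: L2; split.
have PcPd : P c <= P d.
  rewrite leNgt; apply/negP => hdc. apply: L1; split => //. exact: lt_trans hdc PcPb.
apply: (@tool X p r P Rc a c b d eX good hp hr Hp Hr (@nsym _ _ _ ca) _).
- by apply: contraNneq db => ->.
- by rewrite !inE negb_or eq_sym ab /= eq_sym.
- by rewrite !inE negb_or da eq_sym cd.
- rewrite Rc0; lra.
- rewrite Pa; lra.
- rewrite Pa Rc0; nra.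
- rewrite Pa Rc0; nra.
Qed.

End Aux.

Theorem proposition6p9 (R : realFieldType) (n : nat)
    (e : 'I_n.+1 -> 'rV[R]_n) (X : seq 'rV[R]_n)
    (p q r : 'rV[R]_n) (Sp Sq Sr : {set 'I_n.+1}) :
  setting e X ->
  p \in X -> q \in X -> r \in X ->
  is_support e p Sp -> is_support e q Sq -> is_support e r Sr ->
  Sp :|: Sq = setT ->
  #|Sp :&: Sq| = (n - 1)%N ->
  Sr != Sp -> Sr != Sq -> (2 <= #|Sr|)%N ->
  Sr \subset Sp :&: Sq \/ Sr = (Sp :\: Sq) :|: (Sq :\: Sp).
Proof.
case=> aff [sum0 [eX [_ [_ good]]]] hp hq hr sp sq sr SU SI rp rq r2.
have sNT := @support_notT R n e aff sum0.
have sC := @support_coords R n e aff sum0.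
have cr := @core R n e aff sum0.
have cardle : forall x S, is_support e x S -> (#|S| <= n)%N.
  move=> x S hS; have := proper_card (A := S) (B := [set: 'I_n.+1]).
  rewrite properT (sNT _ _ hS) cardsT card_ord ltnS; by apply.
have hn : (2 <= n)%N by apply: leq_trans r2 (cardle _ _ sr).
have cp := cardle _ _ sp; have cq := cardle _ _ sq.
have := cardsUI Sp Sq; rewrite SU SI cardsT card_ord => hc.
have [cSp cSq] : #|Sp| = n /\ #|Sq| = n.
  move: hc cq cp; clear -hn; move: #|Sp| #|Sq| => x y; lia.
have [a Ha] : exists a, forall i, (i \in Sp) = (i != a).
  have : #|~: Sp| == 1%N by have := cardsC Sp; rewrite cSp card_ord => h; apply/eqP; lia.
  case/cards1P => a Ha; exists a => i.
  by rewrite -[i \in Sp]negbK -in_setC Ha inE.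
have [b Hb] : exists b, forall i, (i \in Sq) = (i != b).
  have : #|~: Sq| == 1%N by have := cardsC Sq; rewrite cSq card_ord => h; apply/eqP; lia.
  case/cards1P => b Hb; exists b => i.
  by rewrite -[i \in Sq]negbK -in_setC Hb inE.
have ab : a != b.
  have : a \in Sp :|: Sq by rewrite SU inE.
  by rewrite inE Ha Hb eqxx.
case: (sC _ _ sp) => P [P1 P2 Hp].
case: (sC _ _ sq) => Q [Q1 Q2 Hq].
case: (sC _ _ sr) => Rc [R1 R2 Hr].
have Pa : P a = 0 by apply: P2; rewrite Ha eqxx.
have HP : forall i, i != a -> 0 < P i by move=> i ia; apply: P1; rewrite Ha.
have Qb : Q b = 0 by apply: Q2; rewrite Hb eqxx.
have HQ : forall i, i != b -> 0 < Q i by move=> i ib; apply: Q1; rewrite Hb.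
have R0 : forall i, 0 <= Rc i.
  by move=> i; case: (boolP (i \in Sr)) => iS; [apply: ltW; exact: R1 | rewrite R2].
case: (boolP ((a \in Sr) || (b \in Sr))) => hab; last first.
  left; apply/subsetP => i iS; rewrite inE Ha Hb.
  rewrite negb_or in hab; case/andP: hab => ha hb.
  apply/andP; split; apply/eqP => ei; subst i; by [rewrite iS in ha | rewrite iS in hb].
case: (boolP [exists d, (d \in Sr) && (d != a) && (d != b)]) => hd; last first.
  right. have sub : Sr \subset [set a; b].
    apply/subsetP => i iS; rewrite !inE.
    move/existsPn: hd => /(_ i); rewrite iS /= negb_and !negbK; by case/orP=> ->; rewrite ?orbT.
  have : Sr == [set a; b].
    by move: ab; rewrite eqEcard sub cards2 => ->.
  move/eqP => ->. apply/setP => i; rewrite !inE Ha Hb.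
  case: (eqVneq i a) => [->|ia].
    by rewrite /= andbF /=; exact: esym ab.
  by case: (eqVneq i b).
case/existsP: hd => d /andP [/andP [dS da] db].
case: (boolP [exists c, (c \notin Sr) && (c != a) && (c != b)]) => hc'; last first.
  exfalso. move/existsPn: hc' => hc'.
  have Hin : forall i, i != a -> i != b -> i \in Sr.
    move=> i ia ib; have := hc' i; rewrite ia ib !andbT; by rewrite negbK.
  case/orP: hab => [aS|bS].
  - case: (boolP (b \in Sr)) => bS.
    + have : Sr == setT.
        rewrite eqEsubset subsetT /=; apply/subsetP => i _.
        case: (eqVneq i a) => [->//|ia]; case: (eqVneq i b) => [->//|ib]; exact: Hin.
      by rewrite (negbTE (sNT _ _ sr)).
    + move/eqP: rq; apply; apply/setP => i; rewrite Hb.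
      case: (eqVneq i b) => [->|ib]; first by rewrite (negbTE bS).
      case: (eqVneq i a) => [->//|ia]; exact: Hin.
  - case: (boolP (a \in Sr)) => aS.
    + have : Sr == setT.
        rewrite eqEsubset subsetT /=; apply/subsetP => i _.
        case: (eqVneq i a) => [->//|ia]; case: (eqVneq i b) => [->//|ib]; exact: Hin.
      by rewrite (negbTE (sNT _ _ sr)).
    + move/eqP: rp; apply; apply/setP => i; rewrite Ha.
      case: (eqVneq i a) => [->|ia]; first by rewrite (negbTE aS).
      case: (eqVneq i b) => [->//|ib]; exact: Hin.
case/existsP: hc' => c /andP [/andP [cS ca] cb].
have Rc0 : Rc c = 0 by apply: R2.
have Rd : 0 < Rc d by apply: R1.
have cd : c != d by apply: contraNneq cS => ->.
exfalso. case/orP: hab => [aS|bS].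
- apply: (cr _ _ _ _ _ _ _ _ _ _ _ eX good hp hq hr Hp Hq Hr Pa HP Qb HQ R0 Rc0 Rd (R1 _ aS) ab ca cb da db cd).
- apply: (cr _ _ _ _ _ _ _ _ _ _ _ eX good hq hp hr Hq Hp Hr Qb HQ Pa HP R0 Rc0 Rd (R1 _ bS) (@nsym _ _ _ ab) cb ca db da cd).
Qed.
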